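(* Let $a\in\mathbb{Z}_{25}$ satisfy $2a^2-2a+1\equiv 0\pmod{25}$ and let $(\mathbb{Z}_{25},\cdot)$ be the quadratical quasigroup with $x\cdot y=ax+(1-a)y \pmod{25}$. Then $(\mathbb{Z}_{25},\cdot)$ is not isomorphic to any of $Q1\times Q1$, $Q1\times (Q1)^*$, $(Q1)^*\times Q1$, $(Q1)^*\times(Q1)^*$.
   Context: $Q1$ denotes (up to isomorphism) the quadratical quasigroup $(\mathbb{Z}_5,\cdot)$ with $x\cdot y=4x+2y\pmod 5$, and $(Q1)^*$ its dual, isomorphic to $(\mathbb{Z}_5,\circ)$ with $x\circ y=2x+4y\pmod 5$ (the dual of a groupoid $(Q,\cdot)$ is $(Q,* )$ with $x*y=y\cdot x$). Products are direct products with componentwise operation. A quadratical quasigroup is a quasigroup satisfying $xy\cdot x=zx\cdot yz$. *)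

(* Defs.v *)
From mathcomp Require Import all_boot all_algebra.
Set Implicit Arguments. Unset Strict Implicit. Unset Printing Implicit Defensive.
Import GRing.Theory.
Local Open Scope ring_scope.

Definition groupoid_iso (S T : Type) (opS : S -> S -> S) (opT : T -> T -> T)
  (f : S -> T) : Prop :=
  bijective f /\ forall x y, f (opS x y) = opT (f x) (f y).

Definition groupoid_isomorphic (S T : Type) (opS : S -> S -> S) (opT : T -> T -> T) : Prop :=
  exists f : S -> T, groupoid_iso opS opT f.

Definition dual_op (S : Type) (op : S -> S -> S) : S -> S -> S := fun x y => op y x.

Definition prod_op (S T : Type) (opS : S -> S -> S) (opT : T -> T -> T)
  : S * T -> S * T -> S * T :=
  fun p q => (opS p.1 q.1, opT p.2 q.2).

Definition Q1_op (x y : 'Z_5) : 'Z_5 := 4 * x + 2 * y.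

Definition Z25_op (a : 'Z_25) (x y : 'Z_25) : 'Z_25 := a * x + (1 - a) * y.

(* Main.v *)
Require Import Defs.
From mathcomp Require Import all_boot all_algebra.
Import GRing.Theory.
Local Open Scope ring_scope.

Definition tt4 {T : Type} (op : T -> T -> T) (x y : T) : T :=
  op y (op y (op y (op y x))).

Lemma iso_transfer (S T : Type) (opS : S -> S -> S) (opT : T -> T -> T) :
  (forall u v : T, tt4 opT u v = u) ->
  groupoid_isomorphic opS opT -> forall x y : S, tt4 opS x y = x.
Proof.
move=> H [f [[g fK gK] Hf]] x y.
have: f (tt4 opS x y) = f x by rewrite /tt4 !Hf; apply: H.
by move/(can_inj fK).
Qed.

Lemma Q1_id : forall u v : 'Z_5, tt4 Q1_op u v = u.
Proof.
move=> u v; apply/val_inj.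
case: u => [[|[|[|[|[|//]]]]] ?]; case: v => [[|[|[|[|[|//]]]]] ?]; by [].
Qed.

Lemma Q1d_id : forall u v : 'Z_5, tt4 (dual_op Q1_op) u v = u.
Proof.
move=> u v; apply/val_inj.
case: u => [[|[|[|[|[|//]]]]] ?]; case: v => [[|[|[|[|[|//]]]]] ?]; by [].
Qed.

Lemma prod_id (S T : Type) (opS : S -> S -> S) (opT : T -> T -> T) :
  (forall u v : S, tt4 opS u v = u) -> (forall u v : T, tt4 opT u v = u) ->
  forall u v, tt4 (prod_op opS opT) u v = u.
Proof.
move=> H1 H2 [u1 u2] [v1 v2]; rewrite /tt4 /prod_op /=.
by have := H1 u1 v1; have := H2 u2 v2; rewrite /tt4 => -> ->.
Qed.

Lemma Z25_bad (a : 'Z_25) :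
  2 * a ^+ 2 - 2 * a + 1 = 0 -> tt4 (Z25_op a) 0 1 != 0.
Proof.
move/eqP; case: a => [[|[|[|[|[|[|[|[|[|[|[|[|[|[|[|[|[|[|[|[|[|[|[|[|[|//]]]]]]]]]]]]]]]]]]]]]]]]] ?]; vm_compute; by [].
Qed.

Theorem theorem7p2 (a : 'Z_25) :
  2 * a ^+ 2 - 2 * a + 1 = 0 ->
  ~ groupoid_isomorphic (Z25_op a) (prod_op Q1_op Q1_op) /\
  ~ groupoid_isomorphic (Z25_op a) (prod_op Q1_op (dual_op Q1_op)) /\
  ~ groupoid_isomorphic (Z25_op a) (prod_op (dual_op Q1_op) Q1_op) /\
  ~ groupoid_isomorphic (Z25_op a) (prod_op (dual_op Q1_op) (dual_op Q1_op)).
Proof.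
move=> Ha; have Hb := @Z25_bad a Ha.
have K : forall (T : Type) (opT : T -> T -> T),
    (forall u v : T, tt4 opT u v = u) -> ~ groupoid_isomorphic (Z25_op a) opT.
  by move=> T opT HT Hi; move: Hb; rewrite (@iso_transfer _ _ _ _ HT Hi) eqxx.
split; first exact/K/prod_id/Q1_id/Q1_id.
split; first exact/K/prod_id/Q1d_id/Q1_id.
split; first exact/K/prod_id/Q1_id/Q1d_id.
exact/K/prod_id/Q1d_id/Q1d_id.
Qed.
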